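(* Let $\alpha>2$, $\theta_0\ge 0$, $r_0>0$, and $\overline{R}_{\theta_0}=\log_2(1+\theta_0)$. For each integer $N\ge 1$ let $p_N$ be the activity probability of either TDMA or FDMA/TDMA, $$p_N^{\mathrm{TDMA}}=\tfrac1N\Pr\{K>0\},\qquad p_N^{\mathrm{FDMA/TDMA}}=\tfrac1N\textstyle\sum_{k>0}\Pr\{K=k\}\min\{k,N\},$$ with $K$ distributed as $\Pr\{K=k\}=\frac{3.5^{3.5}\Gamma(k+3.5)\tau^{3.5}}{\Gamma(3.5)k!(1+3.5\tau)^{k+3.5}}$, $k\ge0$, for some $\tau>0$. Let $F_N(\theta)=1-\frac{1}{1+p_N\rho(\theta)}$ and assume the delay satisfies $\Pr\{L=0\}=1$, so that the rate outage probability is $$F_R(N)=\begin{cases}F_N(\theta_0),& N\le \overline{R}_{\theta_0}/r_0,\\ F_N(2^{r_0N}-1),& N\ge \overline{R}_{\theta_0}/r_0.\end{cases}$$ Then every integer $N^*\ge1$ minimizing $F_R(N)$ over $N\ge 1$ satisfies $$N^*\ge \max\big\{1,\lfloor \overline{R}_{\theta_0}/r_0\rfloor\big\}.$$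
   Context: $\rho(\theta)=\theta^{2/\alpha}\int_{\theta^{-2/\alpha}}^{\infty}\frac{du}{1+u^{\alpha/2}}$ for $\theta>0$ and $\rho(0)=0$. $F_N$ is the CDF of the SIR of the typical UE when $N$ subchannels are used; $F_R(N)$ is the probability that the user rate $R=\mathbf{1}\{\mathrm{SIR}\ge\theta_0\}\log_2(1+\mathrm{SIR})/N$ is at most $r_0$. TDMA: one UE served per slot on one uniformly random subchannel out of $N$. FDMA/TDMA: UEs randomly ordered and assigned distinct uniformly random subchannels within consecutive blocks of $N$, subchannels being time-shared across blocks. *)

(* Defs.v *)
From Stdlib Require Import Reals Lra Arith Factorial.
Open Scope R_scope.

(* Rising factorial (a)_k = Gamma(a+k)/Gamma(a) = a (a+1) ... (a+k-1). *)
Fixpoint rising (a : R) (k : nat) : R :=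
  match k with
  | O => 1
  | S k' => rising a k' * (a + INR k')
  end.

Definition pmfK (tau : R) (k : nat) : R :=
  Rpower 3.5 3.5 * rising 3.5 k * Rpower tau 3.5
  / (INR (fact k) * Rpower (1 + 3.5 * tau) (INR k + 3.5)).

Inductive scheme := TDMA | FDMA_TDMA.

(* weight such that N * p_N = sum_k Pr{K=k} * weight N k *)
Definition weight (s : scheme) (N k : nat) : R :=
  match s with
  | TDMA => if (0 <? k)%nat then 1 else 0
  | FDMA_TDMA => INR (Nat.min k N)
  end.

Definition activity_prob (s : scheme) (tau : R) (p : nat -> R) : Prop :=
  forall N : nat, (1 <= N)%nat ->
    infinite_sum (fun k => pmfK tau k * weight s N k) (INR N * p N).

Definition improper_int_infty (f : R -> R) (a l : R) : Prop :=
  forall eps : R, eps > 0 -> exists M : R, forall b : R, b >= M ->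
    exists pr : Riemann_integrable f a b, Rabs (RiemannInt pr - l) < eps.

Definition is_rho (alpha : R) (rho : R -> R) : Prop :=
  rho 0 = 0 /\
  forall theta : R, theta > 0 ->
    exists I : R,
      improper_int_infty (fun u => / (1 + Rpower u (alpha / 2)))
                         (Rpower theta (- (2 / alpha))) I
      /\ rho theta = Rpower theta (2 / alpha) * I.

Definition sir_cdf (rho : R -> R) (p : nat -> R) (N : nat) (theta : R) : R :=
  1 - / (1 + p N * rho theta).

Definition Rbar (theta0 : R) : R := ln (1 + theta0) / ln 2.

Definition rate_outage (rho : R -> R) (p : nat -> R) (theta0 r0 : R) (N : nat) : R :=
  if Rle_dec (INR N) (Rbar theta0 / r0)
  then sir_cdf rho p N theta0
  else sir_cdf rho p N (Rpower 2 (r0 * INR N) - 1).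

(* Main.v *)
Require Import Defs.
From Stdlib Require Import Reals Lra Lia Psatz ZArith Arith.
Open Scope R_scope.

Lemma Rpower_pos x y : 0 < Rpower x y.
Proof. unfold Rpower; apply exp_pos. Qed.

Lemma rising_pos k : 0 < rising 3.5 k.
Proof.
  induction k; simpl; [lra|]. apply Rmult_lt_0_compat; auto.
  pose proof (pos_INR k); lra.
Qed.

Lemma pmfK_pos tau k : 0 < pmfK tau k.
Proof.
  unfold pmfK. unfold Rdiv. apply Rmult_lt_0_compat.
  - apply Rmult_lt_0_compat; [apply Rmult_lt_0_compat|]; auto using Rpower_pos, rising_pos.
  - apply Rinv_0_lt_compat. apply Rmult_lt_0_compat; auto using Rpower_pos.
    apply lt_0_INR. pose proof (lt_O_fact k). lia.
Qed.

Lemma sum_ge_term (u : nat -> R) j d :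
  (forall k, 0 <= u k) -> u j <= sum_f_R0 u (j + d).
Proof.
  intros Hu. induction d.
  - rewrite Nat.add_0_r. destruct j; simpl; [lra|].
    pose proof (cond_pos_sum u j Hu). lra.
  - rewrite Nat.add_succ_r. simpl. specialize (Hu (S (j+d))). lra.
Qed.

Lemma series_pos (u : nat -> R) l j :
  infinite_sum u l -> (forall k, 0 <= u k) -> 0 < u j -> 0 < l.
Proof.
  intros Hs Hu Hj.
  destruct (Hs (u j / 2)) as [N HN]; [lra|].
  specialize (HN (j + N)%nat ltac:(lia)).
  pose proof (sum_ge_term u j N Hu). unfold R_dist in HN.
  apply Rabs_def2 in HN. lra.
Qed.

Lemma sum_lin (u v : nat -> R) c d n :
  sum_f_R0 (fun k => c * u k - d * v k) n = c * sum_f_R0 u n - d * sum_f_R0 v n.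
Proof. induction n; simpl; [ring|]. rewrite IHn. ring. Qed.

Lemma cv_const c : Un_cv (fun _ => c) c.
Proof. intros e He. exists 0%nat. intros. unfold R_dist. rewrite Rminus_diag, Rabs_R0. lra. Qed.

Lemma p_pos s tau p M : activity_prob s tau p -> (1 <= M)%nat -> 0 < p M.
Proof.
  intros Hp HM.
  assert (H : 0 < INR M * p M).
  { apply (series_pos _ _ 1%nat (Hp M HM)).
    - intros k. apply Rmult_le_pos; [left; apply pmfK_pos|].
      destruct s; simpl.
      + destruct (0 <? k)%nat; lra.
      + apply pos_INR.
    - apply Rmult_lt_0_compat; [apply pmfK_pos|].
      destruct s; simpl; [lra|]. destruct M; [lia|]. simpl; lra. }
  assert (0 < INR M) by (apply lt_0_INR; lia). nra.
Qed.

Lemma p_decr s tau p A B : activity_prob s tau p -> (1 <= A)%nat -> (A < B)%nat -> p B < p A.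
Proof.
  intros Hp HA HAB.
  pose (v := fun k => INR B * (pmfK tau k * weight s A k) - INR A * (pmfK tau k * weight s B k)).
  assert (Hv : infinite_sum v (INR B * (INR A * p A) - INR A * (INR B * p B))).
  { intros e He.
    assert (Hc : Un_cv (fun n => sum_f_R0 v n) (INR B * (INR A * p A) - INR A * (INR B * p B))).
    { eapply Un_cv_ext.
      { intro n. unfold v. symmetry. apply sum_lin. }
      apply CV_minus; apply CV_mult; try apply cv_const.
      - intros e' He'; apply (Hp A HA e' He').
      - intros e' He'; apply (Hp B ltac:(lia) e' He'). }
    apply Hc; auto. }
  assert (Hpos : 0 < INR B * (INR A * p A) - INR A * (INR B * p B)).
  { apply (series_pos v _ 1%nat Hv).
    - intros k. unfold v.
      replace (INR B * (pmfK tau k * weight s A k) - INR A * (pmfK tau k * weight s B k))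
        with (pmfK tau k * (INR B * weight s A k - INR A * weight s B k)) by ring.
      apply Rmult_le_pos; [left; apply pmfK_pos|].
      destruct s; simpl.
      + destruct (0 <? k)%nat; [|lra].
        assert (INR A < INR B) by (apply lt_INR; lia). lra.
      + rewrite <- !mult_INR.
        assert (INR (A * Nat.min k B) <= INR (B * Nat.min k A)) by (apply le_INR; nia).
        lra.
    - unfold v.
      replace (INR B * (pmfK tau 1 * weight s A 1) - INR A * (pmfK tau 1 * weight s B 1))
        with (pmfK tau 1 * (INR B * weight s A 1 - INR A * weight s B 1)) by ring.
      apply Rmult_lt_0_compat; [apply pmfK_pos|].
      assert (INR A < INR B) by (apply lt_INR; lia).
      destruct s; unfold weight.
      + simpl; lra.
      + assert (E1 : Nat.min 1 A = 1%nat) by lia. assert (E2 : Nat.min 1 B = 1%nat) by lia.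
        rewrite E1, E2. simpl. lra. }
  assert (0 < INR A) by (apply lt_0_INR; lia).
  assert (0 < INR B) by (apply lt_0_INR; lia).
  destruct (Rlt_or_le (p B) (p A)) as [|Hle]; auto.
  assert (0 <= INR A * INR B * (p B - p A)).
  { apply Rmult_le_pos; [|lra]. left; apply Rmult_lt_0_compat; auto. }
  nra.
Qed.

Lemma int_pos c a I : 0 < c -> 0 < a ->
  improper_int_infty (fun u => / (1 + Rpower u c)) a I -> 0 < I.
Proof.
  intros Hc Ha Hi.
  set (f := fun u => / (1 + Rpower u c)).
  set (k := / (1 + Rpower (a+1) c)).
  assert (Hk : 0 < k) by (unfold k; apply Rinv_0_lt_compat; pose proof (Rpower_pos (a+1) c); lra).
  destruct (Hi (k / 2) ltac:(lra)) as [M HM].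
  destruct (HM (Rmax M (a+1)) ltac:(pose proof (Rmax_l M (a+1)); lra)) as [pr Hpr].
  set (b := Rmax M (a+1)) in *.
  assert (Hb : a + 1 <= b) by apply Rmax_r.
  assert (pr1 : Riemann_integrable f a (a+1)) by (apply (RiemannInt_P22 pr); lra).
  assert (pr2 : Riemann_integrable f (a+1) b) by (apply (RiemannInt_P23 pr); lra).
  assert (Hs := RiemannInt_P26 pr1 pr2 pr).
  assert (H1 : RiemannInt (RiemannInt_P14 a (a+1) k) <= RiemannInt pr1).
  { apply RiemannInt_P19; [lra|]. intros x Hx. unfold fct_cte, f, k.
    assert (Rpower x c <= Rpower (a+1) c).
    { unfold Rpower. left. apply exp_increasing. apply Rmult_lt_compat_l; auto.
      apply ln_increasing; lra. }
    apply Rinv_le_contravar; [pose proof (Rpower_pos x c); lra | lra]. }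
  rewrite RiemannInt_P15 in H1.
  assert (H2 : RiemannInt (RiemannInt_P14 (a+1) b 0) <= RiemannInt pr2).
  { apply RiemannInt_P19; [lra|]. intros x Hx. unfold fct_cte, f.
    left; apply Rinv_0_lt_compat; pose proof (Rpower_pos x c); lra. }
  rewrite RiemannInt_P15 in H2.
  apply Rabs_def2 in Hpr. unfold f in *. lra.
Qed.

Theorem proposition2 (alpha theta0 r0 tau : R) (s : scheme)
  (rho : R -> R) (p : nat -> R)
  (Halpha : alpha > 2) (Htheta0 : theta0 >= 0) (Hr0 : r0 > 0) (Htau : tau > 0)
  (Hrho : is_rho alpha rho) (Hp : activity_prob s tau p)
  (Nstar : nat) (HNstar : (1 <= Nstar)%nat)
  (Hmin : forall N : nat, (1 <= N)%nat ->
            rate_outage rho p theta0 r0 Nstar <= rate_outage rho p theta0 r0 N) :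
  Rmax 1 (IZR (Int_part (Rbar theta0 / r0))) <= INR Nstar.
Proof.
  apply Rmax_lub.
  { apply (le_INR 1 Nstar) in HNstar. simpl in HNstar. lra. }
  set (x := Rbar theta0 / r0) in *.
  set (z := Int_part x).
  destruct (base_Int_part x) as [Hz1 _]. fold z in Hz1.
  destruct (Rlt_or_le (INR Nstar) (IZR z)) as [Hlt|]; [|assumption].
  exfalso.
  rewrite INR_IZR_INZ in Hlt. apply lt_IZR in Hlt.
  set (M := Z.to_nat z).
  assert (HM : INR M = IZR z) by (unfold M; rewrite INR_IZR_INZ, Z2Nat.id; [reflexivity|lia]).
  assert (HNM : (Nstar < M)%nat) by (unfold M; lia).
  assert (HN1 : 1 <= INR Nstar) by (apply (le_INR 1 Nstar) in HNstar; simpl in HNstar; lra).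
  assert (HNx : INR Nstar <= x).
  { assert (INR Nstar < INR M) by (apply lt_INR; auto). lra. }
  assert (HMx : INR M <= x) by lra.
  assert (Htp : theta0 > 0).
  { destruct (Req_dec theta0 0) as [E|]; [|lra].
    unfold x, Rbar in HNx. rewrite E, Rplus_0_r, ln_1 in HNx. unfold Rdiv in HNx.
    rewrite Rmult_0_l, Rmult_0_l in HNx. lra. }
  destruct Hrho as [_ Hrho]. destruct (Hrho theta0 Htp) as [I [HI Hr]].
  assert (HIp : 0 < I).
  { apply (int_pos (alpha / 2) (Rpower theta0 (- (2 / alpha)))); auto.
    - unfold Rdiv. apply Rmult_lt_0_compat; lra.
    - apply Rpower_pos. }
  assert (Hrp : 0 < rho theta0) by (rewrite Hr; apply Rmult_lt_0_compat; auto using Rpower_pos).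
  specialize (Hmin M ltac:(lia)).
  unfold rate_outage in Hmin. fold x in Hmin.
  destruct (Rle_dec (INR Nstar) x); [|contradiction].
  destruct (Rle_dec (INR M) x); [|contradiction].
  unfold sir_cdf in Hmin.
  pose proof (p_decr s tau p Nstar M Hp HNstar HNM) as Hd.
  pose proof (p_pos s tau p M Hp ltac:(lia)) as HpM.
  assert (Hlt2 : p M * rho theta0 < p Nstar * rho theta0) by (apply Rmult_lt_compat_r; auto).
  assert (0 < p M * rho theta0) by (apply Rmult_lt_0_compat; auto).
  assert (/ (1 + p Nstar * rho theta0) < / (1 + p M * rho theta0)).
  { apply Rinv_lt_contravar; [apply Rmult_lt_0_compat|]; lra. }
  lra.
Qed.
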